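(* Let a system $u_{n+1,x}^j = F^j(x,n,u_{n,x}^j,u_n,u_{n+1})$, $j=1,\dots,N$, be the compatibility condition of the linear systems $$\Phi_{n+1}=U_n\Phi_n,\qquad \Phi_{n,x}=V_n\Phi_n,$$ i.e. $D_xU_n=V_{n+1}U_n-U_nV_n$ holds by virtue of the system, where $U_n=(a_{ik,n})$ is an $m\times m$ upper triangular matrix and $V_n=(b_{ik,n})$ is an $m\times m$ lower triangular matrix, with entries functions of the dynamical variables. For $k\ge0$ let $P^{(k)}_n=U_{n+k}U_{n+k-1}\cdots U_n$ and let $p^{(k)}_{1m,n}$ denote its entry in the first row and last column. If $D_nb_{11,n}=b_{11,n}$ and $b_{11,n}=b_{mm,n}$, then $J=p^{(k)}_{1m,n}$ is an $x$-integral of the system, i.e. $D_xJ=0$ by virtue of the system.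
   Context: The dynamical variables are $u^j_n,u^j_{n\pm1},\dots$ and $u^j_{n,x},u^j_{n,xx},\dots$, treated as independent; $D_n$ is the shift $D_ny(n)=y(n+1)$ and $D_x$ is the total $x$-derivative, with $x$-derivatives of shifted variables expressed through the system (and its converse form $u^j_{n-1,x}=G^j(x,n,u^j_{n,x},u_n,u_{n-1})$, assumed to exist). A function $J$ of $x,n$ and $u_n,u_{n\pm1},u_{n\pm2},\dots$ is called an $x$-integral if $D_xJ=0$ holds by virtue of the system. *)

(* Defs.v *)
From mathcomp Require Import all_boot all_order all_algebra.
Set Implicit Arguments. Unset Strict Implicit. Unset Printing Implicit Defensive.
Import GRing.Theory.
Local Open Scope ring_scope.

(* A (total x-) derivation on the ring A of functions of the dynamical
   variables, taken modulo the system ("by virtue of the system"). *)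
Definition is_derivation (A : comNzRingType) (Dx : A -> A) : Prop :=
  (forall a b : A, Dx (a + b) = Dx a + Dx b) /\
  (forall a b : A, Dx (a * b) = Dx a * b + a * Dx b).

Definition mx_Dx (A : comNzRingType) (Dx : A -> A) (m : nat) (M : 'M[A]_m) : 'M[A]_m :=
  map_mx Dx M.

(* the shift applied k times to every entry: U_n |-> U_{n+k} *)
Definition mx_shift (A : comNzRingType) (Dn : A -> A) (k : nat) (m : nat)
  (M : 'M[A]_m) : 'M[A]_m := map_mx (iter k Dn) M.

Definition upper_triangular (A : comNzRingType) (m : nat) (M : 'M[A]_m) : Prop :=
  forall i j : 'I_m, (j < i)%N -> M i j = 0.

Definition lower_triangular (A : comNzRingType) (m : nat) (M : 'M[A]_m) : Prop :=
  forall i j : 'I_m, (i < j)%N -> M i j = 0.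

(* P^{(k)}_n = U_{n+k} U_{n+k-1} ... U_n *)
Fixpoint Pk (A : comNzRingType) (Dn : A -> A) (m : nat) (U : 'M[A]_m) (k : nat)
  : 'M[A]_m :=
  match k with
  | 0 => U
  | k'.+1 => mx_shift Dn k'.+1 U *m Pk Dn U k'
  end.

Definition x_integral (A : comNzRingType) (Dx : A -> A) (J : A) : Prop := Dx J = 0.

(* Main.v *)
Require Import Defs.
From mathcomp Require Import all_boot all_order all_algebra.
Import GRing.Theory.
Local Open Scope ring_scope.

Section Aux.
Variables (A : comNzRingType) (Dx : A -> A) (Dn : {rmorphism A -> A}).
Hypothesis hD : is_derivation Dx.
Hypothesis hC : forall a : A, Dx (Dn a) = Dn (Dx a).

Lemma Dx0 : Dx 0 = 0.
Proof.
case: hD => hadd _.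
have := hadd 0 0; rewrite addr0 => /(congr1 (fun x => x - Dx 0)).
by rewrite subrr addrK.
Qed.

Lemma mxDx_mul n (M N : 'M[A]_n) :
  mx_Dx Dx (M *m N) = mx_Dx Dx M *m N + M *m mx_Dx Dx N.
Proof.
case: hD => hadd hmul.
apply/matrixP => i j; rewrite !mxE (big_morph Dx hadd Dx0) -big_split.
by apply: eq_bigr => l _; rewrite !mxE hmul.
Qed.

Lemma mxDx_B n (M N : 'M[A]_n) :
  mx_Dx Dx (M - N) = mx_Dx Dx M - mx_Dx Dx N.
Proof.
case: hD => hadd _.
have hopp : forall a, Dx (- a) = - Dx a.
  move=> a; apply/eqP; rewrite -subr_eq0 opprK -hadd addNr Dx0 //.
by apply/matrixP => i j; rewrite !mxE hadd hopp.
Qed.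

Lemma iterDn_add j : {morph iter j Dn : a b / a + b}.
Proof. by elim: j => [|j IH] a b //=; rewrite IH rmorphD. Qed.
Lemma iterDn_mul j : {morph iter j Dn : a b / a * b}.
Proof. by elim: j => [|j IH] a b //=; rewrite IH rmorphM. Qed.
Lemma iterDn_0 j : iter j Dn 0 = 0.
Proof. by elim: j => [|j IH] //=; rewrite IH rmorph0. Qed.
Lemma iterDn_opp j a : iter j Dn (- a) = - iter j Dn a.
Proof. by elim: j => [|j IH] //=; rewrite IH rmorphN. Qed.
Lemma iterDn_Dx j a : Dx (iter j Dn a) = iter j Dn (Dx a).
Proof. by elim: j => [|j IH] //=; rewrite hC IH. Qed.

Lemma shift_mul j n (M N : 'M[A]_n) :
  mx_shift Dn j (M *m N) = mx_shift Dn j M *m mx_shift Dn j N.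
Proof.
apply/matrixP => i k; rewrite !mxE (big_morph _ (iterDn_add j) (iterDn_0 j)).
by apply: eq_bigr => l _; rewrite !mxE iterDn_mul.
Qed.

Lemma shift_B j n (M N : 'M[A]_n) :
  mx_shift Dn j (M - N) = mx_shift Dn j M - mx_shift Dn j N.
Proof. by apply/matrixP => i k; rewrite !mxE iterDn_add iterDn_opp. Qed.

End Aux.

Theorem lemma4 (A : comNzRingType) (Dx : A -> A) (Dn : {rmorphism A -> A})
  (m : nat) (U V : 'M[A]_m.+1) :
  is_derivation Dx ->
  bijective Dn ->
  (forall a : A, Dx (Dn a) = Dn (Dx a)) ->
  upper_triangular U ->
  lower_triangular V ->
  mx_Dx Dx U = mx_shift Dn 1 V *m U - U *m V ->
  Dn (V ord0 ord0) = V ord0 ord0 ->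
  V ord0 ord0 = V ord_max ord_max ->
  forall k : nat, x_integral Dx (Pk Dn U k ord0 ord_max).
Proof.
move=> hD _ hC _ hV hU hfix h0m k.
have hsh : forall j, mx_Dx Dx (mx_shift Dn j U) =
    mx_shift Dn j.+1 V *m mx_shift Dn j U - mx_shift Dn j U *m mx_shift Dn j V.
  move=> j.
  have -> : mx_Dx Dx (mx_shift Dn j U) = mx_shift Dn j (mx_Dx Dx U).
    by apply/matrixP => i l; rewrite !mxE iterDn_Dx.
  rewrite hU shift_B !shift_mul; congr (_ *m _ - _).
  by apply/matrixP => i l; rewrite /mx_shift !mxE -iterSr.
have hP : forall k, mx_Dx Dx (Pk Dn U k) =
    mx_shift Dn k.+1 V *m Pk Dn U k - Pk Dn U k *m V.
  elim=> [|k' IH] /=; first by rewrite hU.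
  rewrite mxDx_mul // IH hsh mulmxBl mulmxBr !mulmxA addrA subrK.
  by [].
have := hP k => /matrixP /(_ ord0 ord_max).
rewrite /x_integral !mxE => ->.
rewrite (bigD1 ord0) //= big1; last first.
  move=> i hi; rewrite mxE hV ?iterDn_0 ?mul0r //.
  rewrite lt0n; apply: contra hi => /eqP e; apply/eqP/val_inj; exact e.
rewrite (bigD1 ord_max) //= [X in _ - (_ + X)]big1; last first.
  move=> i hi; rewrite hV ?mulr0 //.
  have := ltn_ord i; rewrite ltnS leq_eqVlt => /orP [/eqP e|] //.
  by move: hi; rewrite -(inj_eq val_inj) /= e eqxx.
have fx : forall j, iter j Dn (V ord0 ord0) = V ord0 ord0.
  by elim=> [|j IH] //=; rewrite IH hfix.
by rewrite mxE fx h0m !addr0 mulrC subrr.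
Qed.
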